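(* Let $\sum_i\lambda_i[\alpha_i][\beta_i]=0$ be a homogeneous Plücker relation on $t$-minors of degree $v$. Then for every $m\times n$ matrix $X$, every $t\times m$ matrix $A$ and every multiset $u$ of elements of $\{1,\dots,m\}$ of cardinality $2t$ one has $$\sum_c[c]_A\,[c']_A\sum_i\lambda_i\,[c\,|\,\alpha_i]_X\,[c'\,|\,\beta_i]_X=0,$$ where $c$ ranges over all strictly increasing sequences of length $t$ contained in $u$ (as sub-multisets) and $c'=u\setminus c$ (multiset difference).
   Context: A Plücker relation on $t$-minors is a relation $\sum_i\lambda_i[\alpha_i][\beta_i]=0$ with $\lambda_i\in\mathbb Z$, valid for the maximal minors of the generic $t\times n$ matrix, where $\alpha_i,\beta_i$ are increasing sequences of length $t$ in $\{1,\dots,n\}$ and $[\alpha]$ is the maximal minor with column indices $\alpha$. It is homogeneous of degree $v$ if the multiset union $\alpha_i\cup\beta_i$ equals the multiset $v$ for all $i$. For a $t\times m$ matrix $A$, $[c]_A$ is the maximal minor of $A$ with column indices $c$ (zero if $c$ has repeated entries), and $[c\,|\,\alpha]_X$ is the minor of $X$ with row indices $c$ and column indices $\alpha$. Matrices have entries in a commutative ring (e.g. a field $K$). *)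

(* Defs.v *)
From HB Require Import structures.
From mathcomp Require Import all_boot all_order all_algebra.
From mathcomp Require Export mpoly.
Set Implicit Arguments. Unset Strict Implicit. Unset Printing Implicit Defensive.
Import Order.TTheory GRing.Theory Num.Theory.
Local Open Scope ring_scope.

(* Index sets {1,...,n} are rendered as 'I_n (0-based). Sequences of indices
   are [seq 'I_n]; a sequence of length t is read entrywise with [onth]
   (an out-of-range entry, which never occurs in the statement, gives 0). *)

Definition minor (R : pzRingType) (t p q : nat) (X : 'M[R]_(p, q))
    (r : seq 'I_p) (s : seq 'I_q) : R :=
  \det (\matrix_(i < t, j < t)
          match onth r i, onth s j with
          | Some a, Some b => X a b
          | _, _ => 0
          end).

Definition maxminor (R : pzRingType) (t m : nat) (A : 'M[R]_(t, m))
    (c : seq 'I_m) : R :=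
  minor t A (enum 'I_t) c.

Definition generic_mx (t n : nat) : 'M[{mpoly int[t * n]}]_(t, n) :=
  \matrix_(i < t, j < n) 'X_(mxvec_index i j).

Definition mdiff (T : eqType) (s r : seq T) : seq T :=
  foldl (fun acc x => rem x acc) s r.

Definition plucker_relation (t n k : nat) (lam : 'I_k -> int)
    (alpha beta : 'I_k -> t.-tuple 'I_n) : Prop :=
  (forall i, sorted (fun x y : 'I_n => (x < y)%N) (alpha i)
             /\ sorted (fun x y : 'I_n => (x < y)%N) (beta i)) /\
  \sum_(i < k) (lam i)%:~R * maxminor (generic_mx t n) (alpha i)
                           * maxminor (generic_mx t n) (beta i) = 0.

Definition plucker_homogeneous (t n k : nat) (alpha beta : 'I_k -> t.-tuple 'I_n)
    (v : seq 'I_n) : Prop :=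
  forall i, perm_eq (val (alpha i) ++ val (beta i)) v.

(* Main.v *)
Require Import Defs.
From HB Require Import structures.
From mathcomp Require Import all_boot all_order all_algebra all_fingroup.
From mathcomp Require Import ring.
Import GRing.Theory.
Local Open Scope ring_scope.
Set Implicit Arguments. Unset Strict Implicit. Unset Printing Implicit Defensive.

Section Comb.
Variables (T : finType) (t : nat).

Definition pt (c : t.-tuple T) (s : 'S_t) : t.-tuple T := [tuple tnth c (s i) | i < t].

Lemma pt_perm c s : perm_eq (pt c s) c.
Proof. by apply/tuple_permP; exists s. Qed.

Lemma pt_inj (c : t.-tuple T) : uniq c -> injective (pt c).
Proof.
move=> Uc s1 s2 /(congr1 (fun f : t.-tuple T => tnth f)) E.
apply/permP => i; have := congr1 (fun f => f i) E.
by rewrite /= !tnth_mktuple => /(tuple_uniqP _ Uc).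
Qed.

Lemma L3 (V : zmodType) (F : t.-tuple T -> V) (HF : forall f : t.-tuple T, ~~ uniq f -> F f = 0) (c : t.-tuple T) :
  \sum_(f : t.-tuple T | perm_eq f c) F f = \sum_(s : 'S_t) F (pt c s).
Proof.
case: (boolP (uniq c)) => Uc; last first.
  rewrite !big1 // => [s _|f Hf]; apply: HF.
    by rewrite (perm_uniq (pt_perm c s)).
  by rewrite (perm_uniq Hf).
rewrite (eq_bigr (fun s => \sum_(f | f == pt c s) F f)); last first.
  by move=> s _; rewrite big_pred1_eq.
rewrite (exchange_big_dep xpredT) //= [LHS]big_mkcond; apply: eq_bigr => f _.
case: ifP => Hf.
  have [s0 Es0] := tuple_permP Hf.
  have {Es0} Es0 : f = pt c s0 by apply: val_inj.
  rewrite (big_pred1 s0) // => s /=; rewrite Es0.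
  apply/eqP/eqP => [/pt_inj -> //|->//].
rewrite big_pred0 // => s /=; apply/negP => /eqP E.
by move: Hf; rewrite E pt_perm.
Qed.
End Comb.

Section Comb2.
Variables (m t : nat).
Local Notation ltI := (fun x y : 'I_m => (x < y)%N).
Local Notation leI := (fun x y : 'I_m => (x <= y)%N).

Lemma ltI_sorted_uniq (s : seq 'I_m) : sorted ltI s = uniq s && sorted leI s.
Proof.
have h1 : sorted ltI s = sorted ltn (map val s) by rewrite sorted_map.
have h2 : sorted leI s = sorted leq (map val s) by rewrite sorted_map.
by rewrite h1 h2 ltn_sorted_uniq_leq (map_inj_uniq val_inj).
Qed.

Lemma ltI_sort_eq (s1 s2 : seq 'I_m) : sorted ltI s1 -> sorted ltI s2 ->
  perm_eq s1 s2 -> s1 = s2.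
Proof.
apply: sorted_eq.
  by move=> x y z /= h1 h2; apply: ltn_trans h1 h2.
move=> x y /andP[h1 h2]; apply: val_inj => /=.
by move: (ltn_trans h1 h2); rewrite ltnn.
Qed.

Lemma sortI_sorted (s : seq 'I_m) : uniq s -> sorted ltI (sort leI s).
Proof.
move=> Us; rewrite ltI_sorted_uniq sort_uniq Us /=.
by apply: sort_sorted => x y; apply: leq_total.
Qed.

Lemma L2 (V : zmodType) (F : t.-tuple 'I_m -> V)
  (HF : forall f : t.-tuple 'I_m, ~~ uniq f -> F f = 0)
  (Q : pred (t.-tuple 'I_m)) (HQ : forall f g : t.-tuple 'I_m, perm_eq f g -> Q f = Q g) :
  \sum_(f | Q f) F f = \sum_(c : t.-tuple 'I_m | sorted ltI c && Q c) \sum_(s : 'S_t) F (pt c s).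
Proof.
rewrite [RHS](eq_bigr (fun c : t.-tuple _ => \sum_(f : t.-tuple 'I_m | perm_eq f c) F f)); last first.
  by move=> c _; rewrite (L3 HF).
rewrite (exchange_big_dep xpredT) //= [LHS]big_mkcond; apply: eq_bigr => f _.
case: (boolP (uniq f)) => Uf; last first.
  by rewrite HF // big1 ?if_same // => c _; rewrite HF.
pose c0 := sort_tuple leI f.
have Ps : perm_eq c0 f by apply: permEl; apply: perm_sort.
have Hc0 : forall c : t.-tuple 'I_m, (sorted ltI c && Q c && perm_eq f c) = (c == c0) && Q f.
  move=> c; apply/idP/idP.
    case/andP => /andP[Sc Qc] Pfc; rewrite (HQ _ _ Pfc) Qc andbT.
    apply/eqP/val_inj/ltI_sort_eq => //=; first exact: sortI_sorted.
    by have := perm_trans Ps Pfc; rewrite perm_sym.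
  case/andP => /eqP -> Qf; rewrite sortI_sorted //=.
  by rewrite perm_sym Ps andbT (HQ _ f).
rewrite (eq_bigl _ _ Hc0); case: ifP => Qf.
  by rewrite (big_pred1 c0) // => c /=; rewrite andbT.
by rewrite big_pred0 // => c; rewrite andbF.
Qed.
End Comb2.

Section Minors.
Variables (R : comNzRingType) (t : nat).

Lemma onth_tuple (T : Type) (f : t.-tuple T) (i : 'I_t) : onth f i = Some (tnth f i).
Proof.
rewrite onthE (nth_map (tnth f i)) ?size_tuple //.
by rewrite -tnth_nth.
Qed.

Lemma onth_enum (i : 'I_t) : onth (enum 'I_t) i = Some i.
Proof.
by rewrite onthE (nth_map i) ?size_enum_ord // nth_ord_enum.
Qed.

Lemma minorE p q (X : 'M[R]_(p, q)) (c : t.-tuple 'I_p) (a : t.-tuple 'I_q) :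
  minor t X c a = \det (\matrix_(i, j) X (tnth c i) (tnth a j)).
Proof.
by congr (\det _); apply/matrixP => i j; rewrite !mxE !onth_tuple.
Qed.

Lemma maxminorE m (A : 'M[R]_(t, m)) (c : t.-tuple 'I_m) :
  maxminor A c = \det (\matrix_(i, j) A i (tnth c j)).
Proof.
by congr (\det _); apply/matrixP => i j; rewrite !mxE onth_enum onth_tuple.
Qed.

Definition Pr p q (X : 'M[R]_(p, q)) (c : t.-tuple 'I_p) (a : t.-tuple 'I_q) :=
  \prod_j X (tnth c j) (tnth a j).

Lemma maxminor_pt m (A : 'M[R]_(t, m)) (c : t.-tuple 'I_m) s :
  maxminor A (pt c s) = (-1) ^+ s * maxminor A c.
Proof.
rewrite !maxminorE.
have -> : \matrix_(i, j) A i (tnth (pt c s) j) = col_perm s (\matrix_(i, j) A i (tnth c j)).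
  by apply/matrixP => i j; rewrite !mxE tnth_mktuple.
by rewrite col_permE det_mulmx det_perm odd_permV mulrC.
Qed.

Lemma maxminor_nuniq m (A : 'M[R]_(t, m)) (c : t.-tuple 'I_m) :
  ~~ uniq c -> maxminor A c = 0.
Proof.
move=> Nu; rewrite maxminorE -det_tr.
have : ~~ injectiveb (tnth c).
  by apply/injectiveP => /tuple_uniqP; rewrite (negbTE Nu).
case/injectivePn => i [j ij Eij].
apply: (determinant_alternate ij) => l; by rewrite !mxE Eij.
Qed.

Lemma L1 m q (A : 'M[R]_(t, m)) (X : 'M[R]_(m, q)) (c : t.-tuple 'I_m) (a : t.-tuple 'I_q) :
  maxminor A c * minor t X c a = \sum_(s : 'S_t) maxminor A (pt c s) * Pr X (pt c s) a.
Proof.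
rewrite minorE -det_tr /determinant mulr_sumr; apply: eq_bigr => s _.
rewrite maxminor_pt /Pr mulrCA mulrA; congr (_ * _).
by apply: eq_bigr => i _; rewrite !mxE tnth_mktuple.
Qed.
End Minors.

Section Transfer.
Variables (t n k : nat) (lam : 'I_k -> int) (alpha beta : 'I_k -> t.-tuple 'I_n).
Hypothesis Hpl : plucker_relation lam alpha beta.

Lemma transfer (S : comNzRingType) (Y : 'M[S]_(t, n)) :
  \sum_(i < k) (lam i)%:~R * maxminor Y (alpha i) * maxminor Y (beta i) = 0.
Proof.
pose w := fun l : 'I_(t * n) => mxvec Y 0 l.
pose ev : {rmorphism {mpoly int[t * n]} -> S} := mmap ( *~%R (1 : S)) w.
have Hev : forall c : seq 'I_n, ev (maxminor (generic_mx t n) c) = maxminor Y c.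
  move=> c; rewrite /maxminor /minor -det_map_mx; congr (\det _).
  apply/matrixP => i j; rewrite !mxE.
  case: (onth _ i) => [a|]; case: (onth c j) => [b|]; rewrite ?rmorph0 //.
  by rewrite mxE /ev /= (@mmapX _ _ _ w intr) mmap1U /w mxvecE.
have := congr1 ev Hpl.2; rewrite rmorph_sum rmorph0 => E; rewrite -[RHS]E.
by apply: eq_bigr => i _; rewrite !rmorphM rmorph_int !Hev.
Qed.
End Transfer.

Lemma sum_ffun_tuple (V : zmodType) (T : finType) (t : nat) (G : {ffun 'I_t -> T} -> V) :
  \sum_(h : {ffun 'I_t -> T}) G h = \sum_(f : t.-tuple T) G [ffun j => tnth f j].
Proof.
rewrite (reindex (fun f : t.-tuple T => [ffun j => tnth f j])) //.
exists (fun h : {ffun 'I_t -> T} => [tuple h j | j < t]) => [f _|h _].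
  by apply: eq_from_tnth => j; rewrite tnth_mktuple ffunE.
by apply/ffunP => j; rewrite ffunE tnth_mktuple.
Qed.

Lemma detB (S : comNzRingType) t m (B : 'M[S]_(t, m)) (M : 'M[S]_(m, t)) :
  \det (B *m M) = \sum_(f : t.-tuple 'I_m)
     (\prod_j M (tnth f j) j) * \det (\matrix_(i, j) B i (tnth f j)).
Proof.
under [RHS]eq_bigr => f _ do rewrite -det_tr.
rewrite -[LHS]det_tr /determinant.
rewrite (eq_bigr (fun s : 'S_t => \sum_(h : {ffun 'I_t -> 'I_m})
   (-1) ^+ s * ((\prod_i M (h i) i) * \prod_i B (s i) (h i)))); last first.
  move=> s _; rewrite -mulr_sumr; congr (_ * _).
  rewrite (eq_bigr (fun i => \sum_l B (s i) l * M l i)); last first.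
    by move=> i _; rewrite !mxE.
  rewrite bigA_distr_bigA; apply: eq_bigr => h _.
  by rewrite -big_split /=; apply: eq_bigr => i _; rewrite mulrC.
rewrite exchange_big sum_ffun_tuple; apply: eq_bigr => f _.
rewrite mulr_sumr; apply: eq_bigr => s _.
rewrite mulrCA; congr (_ * (_ * _)).
  by apply: eq_bigr => i _; rewrite ffunE.
by apply: eq_bigr => i _; rewrite !mxE ffunE.
Qed.

Section Poly.
Variables (R : comNzRingType) (t n m : nat) (A : 'M[R]_(t, m)) (X : 'M[R]_(m, n)).

Definition ms (s : seq 'I_m) : 'X_{1..m} := (\sum_(x <- s) U_(x))%MM.

Lemma ms_cat s1 s2 : ms (s1 ++ s2) = (ms s1 + ms s2)%MM.
Proof. by rewrite /ms big_cat. Qed.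

Lemma msE s1 s2 : (ms s1 == ms s2) = perm_eq s1 s2.
Proof.
apply/eqP/idP => [E|P]; last by apply: perm_big.
apply/allP => x _; apply/eqP.
have := congr1 (fun mm : 'X_{1..m} => mm x) E; rewrite /ms !mnm_sumE.
have H s : (\sum_(y <- s) U_(y)%MM x)%N = count_mem x s.
  rewrite -sum1_count [RHS]big_mkcond /=; apply: eq_bigr => y _.
  by rewrite mnm1E; case: (y == x).
by rewrite !H.
Qed.

Definition Bm : 'M[{mpoly R[m]}]_(t, m) := \matrix_(i, l) ((A i l)%:MP * 'X_l).
Definition Ym : 'M[{mpoly R[m]}]_(t, n) := Bm *m map_mx (@mpolyC m R) X.

Lemma Y2 (a : t.-tuple 'I_n) :
  maxminor Ym a = \sum_(f : t.-tuple 'I_m) (maxminor A f * Pr X f a)%:MP * 'X_[ms f].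
Proof.
rewrite maxminorE.
have -> : \matrix_(i, j) Ym i (tnth a j) =
    Bm *m \matrix_(l, j) (X l (tnth a j))%:MP.
  by apply/matrixP => i j; rewrite !mxE; apply: eq_bigr => l _; rewrite !mxE.
rewrite detB; apply: eq_bigr => f _.
have -> : \matrix_(i, j) Bm i (tnth f j) =
   map_mx (@mpolyC m R) (\matrix_(i, j) A i (tnth f j)) *m diag_mx (\row_j 'X_(tnth f j)).
  by rewrite mul_mx_diag; apply/matrixP => i j; rewrite !mxE.
rewrite det_mulmx det_map_mx det_diag -maxminorE rmorphM /=.
have -> : \prod_i (\row_j 'X_(tnth f j) : 'rV[{mpoly R[m]}]_t) 0 i = 'X_[ms f].
  rewrite /ms (big_morph (fun mm : 'X_{1..m} => 'X_[mm] : {mpoly R[m]}) (@mpolyXD m R) (mpolyX0 m R)).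
  by rewrite big_tuple; apply: eq_bigr => i _; rewrite mxE.
rewrite /Pr rmorph_prod /=; under eq_bigr do rewrite mxE.
by rewrite mulrCA mulrA.
Qed.

Variables (k : nat) (lam : 'I_k -> int) (alpha beta : 'I_k -> t.-tuple 'I_n).
Hypothesis Hpl : plucker_relation lam alpha beta.

Definition G (f g : t.-tuple 'I_m) := maxminor A f * maxminor A g *
  \sum_(i < k) (lam i)%:~R * Pr X f (alpha i) * Pr X g (beta i).

Lemma Y3 (u : seq 'I_m) :
  \sum_(f : t.-tuple 'I_m) \sum_(g : t.-tuple 'I_m | perm_eq (f ++ g) u) G f g = 0.
Proof.
have H := transfer Hpl Ym.
have E : \sum_(i < k) (lam i)%:~R * maxminor Ym (alpha i) * maxminor Ym (beta i) =
   \sum_(f : t.-tuple 'I_m) \sum_(g : t.-tuple 'I_m) (G f g)%:MP * 'X_[(ms f + ms g)%MM].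
  under eq_bigr => i _ do rewrite !Y2 -mulrA big_distrlr /= mulr_sumr.
  rewrite exchange_big; apply: eq_bigr => f _.
  under eq_bigr => i _ do rewrite mulr_sumr.
  rewrite exchange_big; apply: eq_bigr => g _.
  rewrite /G; set af := maxminor A f; set ag := maxminor A g.
  rewrite mpolyXD mulr_sumr rmorph_sum /= mulr_suml; apply: eq_bigr => i _.
  rewrite !rmorphM rmorph_int /=.
  ring.
have := congr1 (mcoeff (ms u)) H; rewrite E raddf0 raddf_sum => E2; rewrite -[RHS]E2.
apply: eq_bigr => f _; rewrite raddf_sum [LHS]big_mkcond; apply: eq_bigr => g _.
rewrite /= mcoeffCM mcoeffX -ms_cat msE; case: ifP => _; by rewrite ?mulr1 ?mulr0.
Qed.
End Poly.

Lemma mdiff_perm (T : eqType) (c u : seq T) : uniq c -> all (fun x => x \in u) c ->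
  perm_eq u (c ++ mdiff u c).
Proof.
elim: c u => [|x c IH] u /=; first by rewrite /mdiff /= perm_refl.
case/andP => xc Uc /andP[xu Ac].
have P1 := perm_to_rem xu.
have Ac' : all (fun y => y \in rem x u) c.
  apply/allP => y yc; have := allP Ac y yc.
  rewrite (perm_mem P1) inE; case/orP => // /eqP Eyx.
  by move: xc; rewrite -Eyx yc.
have := IH _ Uc Ac'; rewrite /mdiff /= => P2.
by apply: (perm_trans P1); rewrite perm_cons.
Qed.

Unset Implicit Arguments.

Theorem lemma6p2 (t n k : nat) (lam : 'I_k -> int)
    (alpha beta : 'I_k -> t.-tuple 'I_n) (v : seq 'I_n)
    (Hpl : plucker_relation lam alpha beta)
    (Hhom : plucker_homogeneous alpha beta v)
    (R : comNzRingType) (m : nat) (X : 'M[R]_(m, n)) (A : 'M[R]_(t, m))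
    (u : seq 'I_m) (Hu : size u = (2 * t)%N) :
  \sum_(c : t.-tuple 'I_m |
          sorted (fun x y : 'I_m => (x < y)%N) c && all (fun x => x \in u) c)
     (let c' := sort (fun x y : 'I_m => (x <= y)%N) (mdiff u c) in
      maxminor A c * maxminor A c'
      * \sum_(i < k) (lam i)%:~R * minor t X c (alpha i) * minor t X c' (beta i))
  = 0.
Proof.
have Y := Y3 A X Hpl u.
have GL : forall f g : t.-tuple 'I_m, ~~ uniq f -> G A X lam alpha beta f g = 0.
  by move=> f g Nf; rewrite /G maxminor_nuniq // !mul0r.
have GR : forall f g : t.-tuple 'I_m, ~~ uniq g -> G A X lam alpha beta f g = 0.
  by move=> f g Ng; rewrite /G (maxminor_nuniq A Ng) mulr0 mul0r.
pose Q := fun f : t.-tuple 'I_m => all (fun x => x \in u) f.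
rewrite -(@big_rmcond _ _ _ _ _ Q) in Y; last first.
  move=> f Nf; rewrite big_pred0 // => g; apply/negP => Pg; move/negP: Nf; apply.
  apply/allP => x xf; rewrite -(perm_mem Pg) mem_cat xf //.
rewrite (@L2 _ _ _ _ _ Q) in Y; last first.
- by move=> f g Pfg; apply: perm_all.
- by move=> f Nf; rewrite big1 // => g _; apply: GL.
rewrite -[RHS]Y; apply: eq_bigr => c /andP[Sc Ac].
have Uc : uniq c by move: Sc; rewrite ltI_sorted_uniq => /andP[].
have Pud := mdiff_perm Uc Ac.
set d := mdiff u c.
have Sd : size (sort (fun x y : 'I_m => (x <= y)%N) d) == t.
  rewrite size_sort; have := perm_size Pud; rewrite size_cat size_tuple Hu => E.
  by apply/eqP; move: E; rewrite mul2n -addnn => /eqP; rewrite eqn_add2l => /eqP.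
pose c'T : t.-tuple 'I_m := Tuple Sd.
have Pc' : perm_eq c'T d by apply: permEl; apply: perm_sort.
cbv zeta.
change (sort (fun x y : 'I_m => (x <= y)%N) d) with (tval c'T).
have HR : forall s : 'S_t, \sum_(g : t.-tuple 'I_m | perm_eq (pt c s ++ g) u)
     G A X lam alpha beta (pt c s) g = \sum_(s' : 'S_t) G A X lam alpha beta (pt c s) (pt c'T s').
  move=> s; rewrite -(L3 (GR (pt c s))); apply: eq_bigl => g.
  rewrite (permPr Pud) (permPl (perm_cat (pt_perm c s) (perm_refl g))) perm_cat2l.
  by rewrite (permPr Pc').
under [RHS]eq_bigr => s _ do rewrite HR.
have E1 : forall i, (maxminor A c * maxminor A c'T) *
    ((lam i)%:~R * minor t X c (alpha i) * minor t X c'T (beta i)) =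
    \sum_(s : 'S_t) \sum_(s' : 'S_t) (lam i)%:~R * (maxminor A (pt c s) * Pr X (pt c s) (alpha i))
        * (maxminor A (pt c'T s') * Pr X (pt c'T s') (beta i)).
  move=> i.
  transitivity ((lam i)%:~R * (maxminor A c * minor t X c (alpha i)) *
                (maxminor A c'T * minor t X c'T (beta i))); first by ring.
  rewrite !L1 -mulrA big_distrlr mulr_sumr; apply: eq_bigr => s _.
  by rewrite mulr_sumr; apply: eq_bigr => s' _; rewrite /= mulrA.
rewrite mulr_sumr (eq_bigr _ (fun i _ => E1 i)).
rewrite exchange_big; apply: eq_bigr => s _.
rewrite exchange_big; apply: eq_bigr => s' _.
rewrite /G mulr_sumr; apply: eq_bigr => i _.
ring.
Qed.
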